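(* Let $B,B'$ be sets of vincular patterns, $p\in S_k$ and $R\subseteq[k]$. If $R$ is reversibly deletable for $p$ with respect to $B$ and also with respect to $B'$, then $R$ is reversibly deletable for $p$ with respect to $B\cup B'$.
   Context: A vincular pattern $(\sigma,X)$, $\sigma\in S_\ell$, $X\subseteq[\ell-1]$, is contained in $\pi$ if some subsequence $\pi_{i_1}\cdots\pi_{i_\ell}$ ($i_1<\dots<i_\ell$) is order-isomorphic to $\sigma$ with $i_{x+1}=i_x+1$ for $x\in X$. For $p\in S_k$ and $w\in[n]^k$ with distinct letters order-isomorphic to $p$, $S_n^B(p;w)$ is the set of $B$-avoiding $\pi\in S_n$ with $\pi_i=w_i$ ($i\le k$). $d_R(\pi)$ deletes the entries of $\pi$ in positions in $R$ and reduces to a permutation; for words $d_R(w)$ deletes $w_r$ ($r\in R$) and subtracts from each remaining $w_i$ the number of $r\in R$ with $w_r<w_i$. $R$ is reversibly deletable for $p$ w.r.t. $B$ if for every $n$ and every such $w$ with $S_n^B(p;w)\ne\emptyset$, $d_R$ restricts to a bijection $S_n^B(p;w)\to S_{n-|R|}^B(d_R(p);d_R(w))$. *)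

(* Defs.v *)
(* Permutations / words are 1-based value sequences (seq nat). *)
From mathcomp Require Import all_boot.
Set Implicit Arguments. Unset Strict Implicit. Unset Printing Implicit Defensive.

Definition is_perm (n : nat) (s : seq nat) : bool := perm_eq s (iota 1 n).

Definition order_iso (s t : seq nat) : Prop :=
  size s = size t /\
  forall i j, i < size s -> j < size s ->
    (nth 0 s i < nth 0 s j) = (nth 0 t i < nth 0 t j).

(* a vincular pattern (sigma, X), sigma in S_l, X a subset of [l-1] *)
Definition vpattern := (seq nat * seq nat)%type.

Definition valid_pattern (b : vpattern) : bool :=
  is_perm (size b.1) b.1 && all (fun x => (1 <= x) && (x <= (size b.1).-1)) b.2.

(* pi contains (sigma, X): an increasing index sequence (0-based positions)
   i_1 < ... < i_l with pi_{i_1}...pi_{i_l} order-isomorphic to sigma and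
   i_{x+1} = i_x + 1 for x in X (x is 1-based). *)
Definition contains (pi : seq nat) (b : vpattern) : Prop :=
  exists idx : seq nat,
    [/\ size idx = size b.1,
        sorted ltn idx,
        all (fun i => i < size pi) idx,
        order_iso [seq nth 0 pi i | i <- idx] b.1 &
        forall x, x \in b.2 -> nth 0 idx x = (nth 0 idx x.-1).+1].

Definition patset := vpattern -> Prop.

Definition avoids (B : patset) (pi : seq nat) : Prop :=
  forall b, B b -> ~ contains pi b.

Definition setU_pat (B B' : patset) : patset := fun b => B b \/ B' b.

Definition SnB (B : patset) (n : nat) (p w : seq nat) (pi : seq nat) : Prop :=
  [/\ is_perm n pi, avoids B pi &
      forall i, 1 <= i <= size w -> nth 0 pi i.-1 = nth 0 w i.-1].

(* delete the entries in (1-based) positions in R *)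
Definition del_pos (R : seq nat) (s : seq nat) : seq nat :=
  [seq nth 0 s i | i <- iota 0 (size s) & i.+1 \notin R].

Definition deleted (R : seq nat) (s : seq nat) : seq nat :=
  [seq nth 0 s i | i <- iota 0 (size s) & i.+1 \in R].

Definition reduce (s : seq nat) : seq nat :=
  [seq (count (fun y => y < x) s).+1 | x <- s].

Definition dR_perm (R : seq nat) (pi : seq nat) : seq nat :=
  reduce (del_pos R pi).

Definition dR_word (R : seq nat) (w : seq nat) : seq nat :=
  [seq x - count (fun y => y < x) (deleted R w) | x <- del_pos R w].

Definition admissible_word (n : nat) (p w : seq nat) : Prop :=
  [/\ size w = size p, uniq w, all (fun x => (1 <= x) && (x <= n)) w &
      order_iso w p].

Definition rev_deletable (B : patset) (p : seq nat) (R : seq nat) : Prop :=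
  forall (n : nat) (w : seq nat),
    admissible_word n p w ->
    (exists pi, SnB B n p w pi) ->
    [/\ (forall pi, SnB B n p w pi ->
            SnB B (n - size R) (dR_perm R p) (dR_word R w) (dR_perm R pi)),
        (forall pi1 pi2, SnB B n p w pi1 -> SnB B n p w pi2 ->
            dR_perm R pi1 = dR_perm R pi2 -> pi1 = pi2) &
        (forall tau, SnB B (n - size R) (dR_perm R p) (dR_word R w) tau ->
            exists2 pi, SnB B n p w pi & dR_perm R pi = tau)].

(* Main.v *)
Require Import Defs.
From mathcomp Require Import all_boot.

Lemma cnt_lt x y (t : seq nat) : uniq t -> x \in t -> x < y ->
  count (fun z => z < x) t < count (fun z => z < y) t.
Proof.
move=> Ut xt xy.
have H := count_predUI (fun z => z < x) (pred1 x) t.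
have H0 : count (predI (fun z => z < x) (pred1 x)) t = 0.
  rewrite (@eq_count _ _ pred0) ?count_pred0 // => z /=.
  by case: (z =P x) => [->|]; rewrite ?ltnn ?andbF.
have H1 : count (pred1 x) t = 1 by rewrite (count_uniq_mem x Ut) xt.
have H2 : count (predU (fun z => z < x) (pred1 x)) t <= count (fun z => z < y) t.
  apply: sub_count => z /= /orP [/ltn_trans -> //|/eqP -> //].
rewrite H0 H1 addn0 in H. rewrite H addn1 in H2. exact: H2.
Qed.

Lemma reduce_inj (s t : seq nat) : uniq t -> perm_eq s t -> reduce s = reduce t -> s = t.
Proof.
move=> Ut Pst E.
have Sz : size s = size t by apply: perm_size.
apply: (eq_from_nth (x0:=0)) => // i Hi.
have := congr1 (nth 0 ^~ i) E; rewrite /reduce (nth_map 0) // (nth_map 0) -?Sz //.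
move=> [] .
move/permP: Pst => C; rewrite C.
have xt : nth 0 s i \in t by rewrite -(perm_mem (introT permP C)) mem_nth.
have yt : nth 0 t i \in t by rewrite mem_nth // -Sz.
case: (ltngtP (nth 0 s i) (nth 0 t i)) => // h.
- by move=> e; have := @cnt_lt _ _ t Ut xt h; rewrite e ltnn.
- by move=> e; have := @cnt_lt _ _ t Ut yt h; rewrite e ltnn.
Qed.

Lemma del_perm R (s : seq nat) : perm_eq (del_pos R s ++ deleted R s) s.
Proof.
rewrite /del_pos /deleted -map_cat.
have -> : [seq i <- iota 0 (size s) | i.+1 \in R] = filter (predC (fun i => i.+1 \notin R)) (iota 0 (size s)).
  by apply: eq_filter => i /=; rewrite negbK.
set P := (fun i : nat => i.+1 \notin R).
have e : perm_eq (filter P (iota 0 (size s)) ++ filter (predC P) (iota 0 (size s))) (iota 0 (size s)) by rewrite perm_filterC.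
apply: (perm_trans (perm_map (nth 0 s) e)).
by rewrite -{3}(mkseq_nth 0 s).
Qed.

Lemma dR_inj (R w : seq nat) n pi1 pi2 :
  all (fun r => (1 <= r) && (r <= size w)) R ->
  is_perm n pi1 -> is_perm n pi2 ->
  (forall i, i < size w -> nth 0 pi1 i = nth 0 w i) ->
  (forall i, i < size w -> nth 0 pi2 i = nth 0 w i) ->
  dR_perm R pi1 = dR_perm R pi2 -> pi1 = pi2.
Proof.
move=> AR P1 P2 W1 W2 E.
have S1 : size pi1 = n by rewrite (perm_size P1) size_iota.
have S2 : size pi2 = n by rewrite (perm_size P2) size_iota.
have inR : forall i, i.+1 \in R -> i < size w.
  by move=> i /(allP AR) /andP [].
have Ed : deleted R pi1 = deleted R pi2.
  rewrite /deleted S1 S2; apply/eq_in_map => i; rewrite mem_filter => /andP [h _].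
  by rewrite W1 ?W2 ?inR.
have U2 : uniq pi2 by rewrite (perm_uniq P2) iota_uniq.
have P12 : perm_eq pi1 pi2 by rewrite (perm_trans P1) // perm_sym.
have Pd : perm_eq (del_pos R pi1) (del_pos R pi2).
  rewrite -(perm_cat2r (deleted R pi1)) {2}Ed.
  rewrite (perm_trans (del_perm R pi1)) // (perm_trans P12) // perm_sym; exact: del_perm.
have Ud : uniq (del_pos R pi2).
  have := del_perm R pi2; move/perm_uniq; rewrite U2 cat_uniq => /andP [] //.
have Ed2 := @reduce_inj _ _ Ud Pd E.
apply: (eq_from_nth (x0:=0)); first by rewrite S1 S2.
move=> i; rewrite S1 => Hi.
case: (boolP (i.+1 \in R)) => h; first by rewrite W1 ?W2 ?inR.
move: Ed2; rewrite /del_pos S1 S2 => /eq_in_map; apply.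
by rewrite mem_filter h mem_iota.
Qed.

Lemma SnB_sub B B' n p w pi : SnB (setU_pat B B') n p w pi -> SnB B n p w pi /\ SnB B' n p w pi.
Proof. by case=> a b c; split; split=> // x Bx; apply: b; [left|right]. Qed.

Lemma SnB_join B B' n p w pi : SnB B n p w pi -> SnB B' n p w pi -> SnB (setU_pat B B') n p w pi.
Proof. by case=> a b c [_ b' _]; split=> // x [/b|/b']. Qed.

Lemma SnB_pref B n p w pi : SnB B n p w pi -> forall i, i < size w -> nth 0 pi i = nth 0 w i.
Proof. by case=> _ _ c i Hi; apply: (c i.+1). Qed.

Theorem mainTheorem9 (B B' : patset) (k : nat) (p R : seq nat) :
  (forall b, B b -> valid_pattern b) ->
  (forall b, B' b -> valid_pattern b) ->
  is_perm k p ->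
  uniq R -> all (fun r => (1 <= r) && (r <= k)) R ->
  rev_deletable B p R -> rev_deletable B' p R ->
  rev_deletable (setU_pat B B') p R.
Proof.
move=> _ _ Pp _ AR D1 D2 n w Aw [pi0 H0].
have [Sw _ _ _] := Aw.
have Sp : size p = k by rewrite (perm_size Pp) size_iota.
have AR' : all (fun r => (1 <= r) && (r <= size w)) R by rewrite Sw Sp.
have [H0a H0b] := SnB_sub _ _ _ _ _ _ H0.
have [i1 j1 s1] := D1 n w Aw (ex_intro _ pi0 H0a).
have [i2 j2 s2] := D2 n w Aw (ex_intro _ pi0 H0b).
split.
- move=> pi /(SnB_sub _ _ _ _ _ _) [ha hb]; apply: SnB_join; [exact: i1|exact: i2].
- move=> pa pb /(SnB_sub _ _ _ _ _ _) [ha _] /(SnB_sub _ _ _ _ _ _) [hb _]; exact: j1.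
- move=> tau /(SnB_sub _ _ _ _ _ _) [ta tb].
  have [q1 Q1 e1] := s1 _ ta.
  have [q2 Q2 e2] := s2 _ tb.
  have eq : q1 = q2.
    apply: (@dR_inj R w n q1 q2 AR' _ _ (SnB_pref _ _ _ _ _ Q1) (SnB_pref _ _ _ _ _ Q2)); last by rewrite e1 e2.
    - by case: Q1.
    - by case: Q2.
  exists q1 => //; apply: SnB_join => //; by rewrite eq.
Qed.
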